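(* Let $\mathit{VI}$ be a finite set of variables with $\#\mathit{VI}=n$. If $j,k\in\mathbb{N}$ with $1\le j<k\le n$, then $\mathrm{MI}(\mathit{TSD}_k)\cap\mathit{TS}_j=\{\mathit{SG}\}$.
   Context: $\mathit{SG}=\wp(\mathit{VI})\setminus\{\emptyset\}$, $\mathit{SH}=\wp(\mathit{SG})$ ordered by inclusion. $\mathrm{tuples}_j(S)=\{T\subseteq S\mid\#T=j\}$, $\mathrm{tuples}_j(sh)=\bigcup_{S'\in sh}\mathrm{tuples}_j(S')$, $\rho_{\mathit{TS}_j}(sh)=\{S\in\mathit{SG}\mid\mathrm{tuples}_j(S)\subseteq\mathrm{tuples}_j(sh)\}$, $\mathit{TS}_j=\rho_{\mathit{TS}_j}(\mathit{SH})$. $\rho_{\mathit{TSD}_k}(sh)=\{\,S\in\mathit{SG}\mid \forall T\subseteq S:\ \#T<k\implies S=\bigcup\{U\in sh\mid T\subseteq U\subseteq S\}\,\}$, $\mathit{TSD}_k=\rho_{\mathit{TSD}_k}(\mathit{SH})$ (complete lattice under inclusion, meet = intersection). $\mathrm{MI}(C)$ denotes the meet-irreducible elements of a complete lattice $C$: $x$ such that $x=y\wedge z$ implies $x=y$ or $x=z$. *)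

(* Defs.v *)
(* VI is a finType T; SG, SH, TS_j, TSD_k as finite sets. *)
From mathcomp Require Import all_boot.
Set Implicit Arguments. Unset Strict Implicit. Unset Printing Implicit Defensive.

Section Sharing.
Variable T : finType.

Definition SG : {set {set T}} := [set S : {set T} | S != set0].

Definition isSH (sh : {set {set T}}) : Prop := sh \subset SG.

Definition tuples (j : nat) (S : {set T}) : {set {set T}} :=
  [set U : {set T} | (U \subset S) && (#|U| == j)].

Definition tuples_sh (j : nat) (sh : {set {set T}}) : {set {set T}} :=
  \bigcup_(S in sh) tuples j S.

Definition rhoTS (j : nat) (sh : {set {set T}}) : {set {set T}} :=
  [set S in SG | tuples j S \subset tuples_sh j sh].

Definition inTS (j : nat) (x : {set {set T}}) : Prop :=
  exists sh, isSH sh /\ x = rhoTS j sh.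

Definition rhoTSD (k : nat) (sh : {set {set T}}) : {set {set T}} :=
  [set S in SG | [forall U0 : {set T},
     ((U0 \subset S) && (#|U0| < k)) ==>
       (S == \bigcup_(U in sh | (U0 \subset U) && (U \subset S)) U)]].

Definition inTSD (k : nat) (x : {set {set T}}) : Prop :=
  exists sh, isSH sh /\ x = rhoTSD k sh.

(* MI(C) for a lattice C (given as a predicate on SH) whose meet is
   intersection: x in C and x = y /\ z (y, z in C) implies x = y or x = z. *)
Definition meet_irreducible (C : {set {set T}} -> Prop) (x : {set {set T}}) : Prop :=
  C x /\ forall y z, C y -> C z -> x = y :&: z -> x = y \/ x = z.

End Sharing.

(* Main.v *)
Require Import Defs.
From mathcomp Require Import all_boot.
Set Implicit Arguments. Unset Strict Implicit. Unset Printing Implicit Defensive.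

Section Aux.
Variable T : finType.

Lemma rhoTSD_sub k sh : rhoTSD k sh \subset SG T.
Proof. by apply/subsetP => S; rewrite inE => /andP[]. Qed.

Lemma rhoTSD_ext k (z : {set {set T}}) : z \subset SG T -> z \subset rhoTSD k z.
Proof.
move=> /subsetP zS; apply/subsetP => S Sz; rewrite inE zS //=.
apply/forallP => U0; apply/implyP => /andP[U0S _].
rewrite eqEsubset; apply/andP; split.
  by apply: (bigcup_sup S); rewrite Sz U0S subxx.
by apply/bigcupsP => U /andP[_ /andP[]].
Qed.

Lemma rhoTSD_small k (z : {set {set T}}) (S : {set T}) :
  #|S| <= k -> S \in rhoTSD k z -> S \in z.
Proof.
move=> Sk; rewrite !inE => /andP[S0 /forallP H].
case/set0Pn: S0 => a aS.
have := H (S :\ a); rewrite subD1set /=.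
have -> : #|S :\ a| < k.
  by move: Sk; rewrite (cardsD1 a S) aS.
move=> /eqP ES.
have : a \in S by [].
rewrite {1}ES => /bigcupP [V /andP[Vz /andP[SaV VS]] aV].
suff -> : S = V by [].
apply/eqP; rewrite eqEsubset VS andbT.
by rewrite -(setD1K aS) subUset sub1set aV SaV.
Qed.

Lemma TS_down j sh (x : {set {set T}}) (S V : {set T}) :
  x = rhoTS j sh -> S \in x -> V \subset S -> V != set0 -> V \in x.
Proof.
move=> -> ; rewrite !inE => /andP[_ H] VS V0; rewrite V0 /=.
apply: subset_trans H; apply/subsetP => U; rewrite !inE => /andP[UV ->].
by rewrite (subset_trans UV VS).
Qed.

Lemma TS_gen j sh (x : {set {set T}}) (S : {set T}) :
  x = rhoTS j sh -> S \in SG T ->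
  (forall U : {set T}, U \subset S -> #|U| = j -> U \in x) -> S \in x.
Proof.
move=> xE SS H; rewrite xE inE SS /=.
apply/subsetP => U; rewrite inE => /andP[US /eqP Uj].
have := H U US Uj; rewrite xE inE => /andP[_ /subsetP]; apply.
by rewrite inE subxx Uj eqxx.
Qed.

Lemma TS_wit j sh (x : {set {set T}}) (S : {set T}) :
  x = rhoTS j sh -> S \in SG T -> S \notin x ->
  exists W : {set T}, [/\ W \subset S, #|W| = j & W \notin x].
Proof.
move=> xE SS Sx.
case: (boolP [exists U : {set T}, [&& U \subset S, #|U| == j & U \notin x]]).
  by case/existsP => U /and3P[? /eqP ? ?]; exists U.
rewrite negb_exists => /forallP H; case/negP: Sx.
apply: (TS_gen xE SS) => U US Uj.
by have := H U; rewrite US Uj eqxx /= negbK.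
Qed.

End Aux.

Theorem corollary4p5 (T : finType) (n j k : nat) :
  #|T| = n -> 1 <= j -> j < k -> k <= n ->
  forall x : {set {set T}},
    (meet_irreducible (inTSD k) x /\ inTS j x) <-> x = SG T.
Proof.
move=> Tn j1 jk kn x; split.
- move=> [[_ MI] [sh [shS xE]]].
  have xS : x \subset SG T.
    by rewrite xE; apply/subsetP => S; rewrite inE => /andP[].
  apply/eqP; rewrite eqEsubset xS /=; apply/subsetP => S SS.
  apply/negPn/negP => Sx.
  have [W [WS Wj Wx]] := TS_wit xE SS Sx.
  have W0 : W != set0 by rewrite -card_gt0 Wj.
  have WSG : W \in SG T by rewrite inE.
  pose y := W |: x. pose z := SG T :\ W.
  have yT : inTSD k y.
    exists y; split; first by rewrite /isSH subUset sub1set WSG xS.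
    apply/eqP; rewrite eqEsubset rhoTSD_ext ?subUset ?sub1set ?WSG ?xS //=.
    apply/subsetP => V Vr.
    case: (leqP #|V| k) => Vk; first exact: rhoTSD_small Vr.
    rewrite in_setU1; apply/orP; right; apply/negPn/negP => Vx.
    have VSG : V \in SG T by apply: (subsetP (rhoTSD_sub k y)).
    have [U [UV Uj Ux]] := TS_wit xE VSG Vx.
    have : ~~ (V \subset U).
      apply/negP => /subset_leq_card; rewrite Uj => /(leq_trans (ltnW Vk)).
      by rewrite leqNgt jk.
    case/subsetPn => a aV aU.
    move: Vr; rewrite inE => /andP[_ /forallP /(_ U)].
    rewrite UV Uj jk /= => /eqP VE.
    move: aV; rewrite {1}VE => /bigcupP [V' /andP[V'y /andP[UV' V'V]] aV'].
    move: V'y; rewrite in_setU1 => /orP[/eqP V'W|V'x].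
      subst V'.
      have UW : U = W.
        by apply/eqP; rewrite eqEcard UV' Wj Uj leqnn.
      by rewrite UW aV' in aU.
    case/negP: Ux; apply: (TS_down xE V'x UV').
    by rewrite -card_gt0 Uj.
  have zT : inTSD k z.
    exists z; split; first by rewrite /isSH subD1set.
    apply/eqP; rewrite eqEsubset rhoTSD_ext ?subD1set //=.
    apply/subsetP => V Vr.
    have VSG : V \in SG T by apply: (subsetP (rhoTSD_sub k z)).
    rewrite in_setD1 VSG andbT; apply/negP => /eqP VW; subst V.
    have := rhoTSD_small (_ : #|W| <= k) Vr; rewrite Wj (ltnW jk) => /(_ isT).
    by rewrite /z in_setD1 eqxx.
  have xyz : x = y :&: z.
    apply/setP => V; rewrite in_setI in_setU1 in_setD1.
    case: (V =P W) => [->|_] /=; first by rewrite (negbTE Wx).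
    case Vx: (V \in x) => //; by rewrite (subsetP xS).
  case: (MI y z yT zT xyz) => E.
    by case/negP: Wx; rewrite E in_setU1 eqxx.
  have : ~~ ([set: T] \subset W).
    apply/negP => /subset_leq_card; rewrite cardsT Wj Tn.
    by rewrite leqNgt (leq_trans jk kn).
  case/subsetPn => a _ aW.
  have : a |: W \in x.
    rewrite E /z in_setD1 inE; apply/andP; split.
      by apply/eqP => /setP /(_ a); rewrite in_setU1 eqxx (negbTE aW).
    by apply/set0Pn; exists a; rewrite in_setU1 eqxx.
  move=> H; case/negP: Wx; apply: (TS_down xE H) => //.
  exact: subsetUr.
- move=> ->; split; last first.
    exists (SG T); split; first exact: subxx.
    apply/setP => S; rewrite /rhoTS in_set; case SS: (S \in SG T) => //=; symmetry.
    apply/subsetP => U; rewrite inE => /andP[US Uj].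
    apply/bigcupP; exists S => //; by rewrite inE US.
  split.
    exists (SG T); split; first exact: subxx.
    apply/eqP; rewrite eqEsubset rhoTSD_sub rhoTSD_ext //.
  move=> y z [sy [_ ->]] [sz [_ ->]] E; left.
  apply/eqP; rewrite eqEsubset rhoTSD_sub E subsetIl //.
Qed.
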